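(* Let $K$ be a field, $S=K[x_1,\ldots,x_n]$ with $\mathfrak{m}=(x_1,\ldots,x_n)$, and let $I\subseteq S$ be a monomial ideal generated in degree $d$. Suppose that for every positive integer $m$ and every monomial $u\in(I^m:\mathfrak{m})\setminus I^m$ one has $\deg(u)=md-1$. Then $\mathrm{Soc}(I)$ is isomorphic, as an $\mathcal{F}(I)$-module, to an ideal of $\mathcal{F}(I)$. In particular, if $\mathrm{Soc}(I)\neq0$, then $\mathrm{rank}\,\mathrm{Soc}(I)=1$.
   Context: $\mathcal{F}(I)=\bigoplus_{m\ge0}I^m/\mathfrak{m}I^m$ is the fiber cone of $I$ and $\mathrm{Soc}(I)=\bigoplus_{m\ge0}(I^m:\mathfrak{m})/I^m$, a graded $\mathcal{F}(I)$-module via multiplication. *)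

(* Defs.v *)
From HB Require Import structures.
From mathcomp Require Import all_boot all_order all_algebra.
From mathcomp Require Import mpoly.
Set Implicit Arguments. Unset Strict Implicit. Unset Printing Implicit Defensive.
Import GRing.Theory.
Local Open Scope ring_scope.

Section Defs.
Variables (K : fieldType) (n : nat).
Local Notation P := {mpoly K[n]}.

Definition ideal_gen (gs : seq P) (p : P) : Prop :=
  exists hs : seq P, size hs = size gs /\
    p = \sum_(i < size gs) hs`_i * gs`_i.

Definition maxideal : P -> Prop := ideal_gen [seq 'X_i | i <- enum 'I_n].

Definition ideal_mul (J L : P -> Prop) (p : P) : Prop :=
  exists s : seq (P * P), (forall x, x \in s -> J x.1 /\ L x.2) /\
    p = \sum_(x <- s) x.1 * x.2.

Fixpoint ideal_pow (I : P -> Prop) (k : nat) : P -> Prop :=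
  match k with
  | 0 => fun _ => True
  | k'.+1 => ideal_mul (ideal_pow I k') I
  end.

Definition colon (J M : P -> Prop) (u : P) : Prop := forall v, M v -> J (u * v).

Definition monomial_ideal (gens : seq 'X_{1..n}) : P -> Prop :=
  ideal_gen [seq 'X_[m] | m <- gens].

(* ---- graded objects, given by representatives ---------------------------
   An element of F(I) = \bigoplus_k I^k / m I^k (resp. of
   Soc(I) = \bigoplus_k (I^k : m) / I^k) is represented by a finitely
   supported family g : nat -> S with g k in I^k (resp. in (I^k : m)),
   modulo the componentwise equivalence g k - g' k in m I^k (resp. in I^k). *)

Definition fin_supp (g : nat -> P) : Prop := exists N, forall k, (N < k)%N -> g k = 0.

Definition F_valid (I : P -> Prop) (g : nat -> P) : Prop :=
  fin_supp g /\ forall k, ideal_pow I k (g k).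
Definition F_eq (I : P -> Prop) (g g' : nat -> P) : Prop :=
  forall k, ideal_mul maxideal (ideal_pow I k) (g k - g' k).

Definition Soc_valid (I : P -> Prop) (c : nat -> P) : Prop :=
  fin_supp c /\ forall k, colon (ideal_pow I k) maxideal (c k).
Definition Soc_eq (I : P -> Prop) (c c' : nat -> P) : Prop :=
  forall k, ideal_pow I k (c k - c' k).

Definition gzero : nat -> P := fun _ => 0.
Definition gadd (g g' : nat -> P) : nat -> P := fun k => g k + g' k.
(* graded multiplication (ring structure of F(I) and its action on Soc(I)) *)
Definition gmul (f c : nat -> P) : nat -> P :=
  fun k => \sum_(i < k.+1) f i * c (k - i)%N.

(* Soc(I) is isomorphic, as an F(I)-module, to an ideal of F(I): there is an
   injective F(I)-linear map Soc(I) -> F(I) (whose image is then an ideal). *)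
Definition soc_iso_to_ideal (I : P -> Prop) : Prop :=
  exists phi : (nat -> P) -> (nat -> P),
    [/\ forall c, Soc_valid I c -> F_valid I (phi c),
        forall c c', Soc_valid I c -> Soc_valid I c' ->
          (Soc_eq I c c' <-> F_eq I (phi c) (phi c')),
        forall c c', Soc_valid I c -> Soc_valid I c' ->
          F_eq I (phi (gadd c c')) (gadd (phi c) (phi c')) &
        forall f c, F_valid I f -> Soc_valid I c ->
          F_eq I (phi (gmul f c)) (gmul f (phi c))].

Definition soc_lin_indep (I : P -> Prop) (cs : seq (nat -> P)) : Prop :=
  forall fs : seq (nat -> P), size fs = size cs ->
    (forall i, (i < size fs)%N -> F_valid I (nth gzero fs i)) ->
    Soc_eq I (\big[gadd/gzero]_(i < size cs) gmul (nth gzero fs i) (nth gzero cs i)) gzero ->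
    forall i, (i < size fs)%N -> F_eq I (nth gzero fs i) gzero.

Definition soc_rank (I : P -> Prop) (r : nat) : Prop :=
  (exists cs : seq (nat -> P), size cs = r /\
     (forall i, (i < size cs)%N -> Soc_valid I (nth gzero cs i)) /\ soc_lin_indep I cs)
  /\ (forall cs : seq (nat -> P), size cs = r.+1 ->
     (forall i, (i < size cs)%N -> Soc_valid I (nth gzero cs i)) -> ~ soc_lin_indep I cs).

Definition soc_nonzero (I : P -> Prop) : Prop :=
  exists c, Soc_valid I c /\ ~ Soc_eq I c gzero.

End Defs.

(* Main.v *)
Require Import Defs.
From HB Require Import structures.
From mathcomp Require Import all_boot all_order all_algebra.
From mathcomp Require Import mpoly.
Set Implicit Arguments. Unset Strict Implicit. Unset Printing Implicit Defensive.
Import GRing.Theory.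
From Stdlib Require Import Classical.
From mathcomp Require Import zify ring.
Local Open Scope ring_scope.

Section Ideals.
Variables (K : fieldType) (n : nat).
Local Notation P := {mpoly K[n]}.

Definition is_ideal (J : P -> Prop) :=
  [/\ J 0, forall p q, J p -> J q -> J (p + q) & forall r p, J p -> J (r * p)].

Lemma ideal0 J : is_ideal J -> J 0. Proof. by case. Qed.
Lemma idealD J p q : is_ideal J -> J p -> J q -> J (p + q).
Proof. by case=> _ h _; apply: h. Qed.
Lemma idealM J r p : is_ideal J -> J p -> J (r * p).
Proof. by case=> _ _ h; apply: h. Qed.
Lemma idealMr J r p : is_ideal J -> J p -> J (p * r).
Proof. by move=> iJ Jp; rewrite mulrC; apply: idealM. Qed.
Lemma idealN J p : is_ideal J -> J p -> J (- p).
Proof. by move=> iJ Jp; rewrite -mulN1r; apply: idealM. Qed.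
Lemma idealB J p q : is_ideal J -> J p -> J q -> J (p - q).
Proof. by move=> iJ Jp Jq; apply: idealD => //; apply: idealN. Qed.
Lemma idealZ J c p : is_ideal J -> J p -> J (c *: p).
Proof. by move=> iJ Jp; rewrite -mul_mpolyC; apply: idealM. Qed.
Lemma ideal_sum J (I : Type) (r : seq I) (F : I -> P) :
  is_ideal J -> (forall i, J (F i)) -> J (\sum_(i <- r) F i).
Proof.
move=> iJ h; elim: r => [|x r ih]; first by rewrite big_nil; apply: ideal0.
by rewrite big_cons; apply: idealD.
Qed.
Lemma ideal_sum_in J (I : eqType) (r : seq I) (F : I -> P) :
  is_ideal J -> (forall i, i \in r -> J (F i)) -> J (\sum_(i <- r) F i).
Proof.
elim: r => [|x r ih] iJ h; first by rewrite big_nil; apply: ideal0.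
rewrite big_cons; apply: idealD => //; first by apply: h; rewrite inE eqxx.
by apply: ih => // i ir; apply: h; rewrite inE ir orbT.
Qed.

Lemma ideal_gen_ideal (gs : seq P) : is_ideal (ideal_gen gs).
Proof.
split.
- exists (nseq (size gs) 0); rewrite size_nseq; split=> //.
  by rewrite big1 // => i _; rewrite nth_nseq if_same mul0r.
- move=> p q [hp [sp ->]] [hq [sq ->]].
  exists (mkseq (fun i => hp`_i + hq`_i) (size gs)); rewrite size_mkseq; split=> //.
  by rewrite -big_split /=; apply: eq_bigr => i _; rewrite nth_mkseq // mulrDl.
- move=> r p [hp [sp ->]].
  exists (mkseq (fun i => r * hp`_i) (size gs)); rewrite size_mkseq; split=> //.
  by rewrite mulr_sumr; apply: eq_bigr => i _; rewrite nth_mkseq // mulrA.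
Qed.

Lemma ideal_gen_mem (gs : seq P) x : x \in gs -> ideal_gen gs x.
Proof.
move=> xg; exists (mkseq (fun i => (i == index x gs)%:R) (size gs)).
rewrite size_mkseq; split=> //.
have xi : (index x gs < size gs)%N by rewrite index_mem.
rewrite (bigD1 (Ordinal xi)) //=.
rewrite nth_mkseq // eqxx mul1r nth_index // big1 ?addr0 //.
move=> i /eqP ne; rewrite nth_mkseq //; case: eqP => [e|]; last by rewrite mul0r.
by case: ne; apply: val_inj.
Qed.

Lemma ideal_mul_ideal (J L : P -> Prop) : is_ideal J -> is_ideal (ideal_mul J L).
Proof.
move=> iJ; split.
- by exists [::]; rewrite big_nil.
- move=> p q [s1 [h1 ->]] [s2 [h2 ->]]; exists (s1 ++ s2); split; last by rewrite big_cat.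
  by move=> x; rewrite mem_cat => /orP [/h1|/h2].
- move=> r p [s [h ->]]; exists [seq (r * x.1, x.2) | x <- s]; split.
    move=> y /mapP [x xs ->] /=; have [] := h x xs; split=> //; exact: idealM.
  by rewrite big_map mulr_sumr; apply: eq_bigr => x _ /=; rewrite mulrA.
Qed.

Lemma ideal_mul_mem (J L : P -> Prop) a b : J a -> L b -> ideal_mul J L (a * b).
Proof. by move=> Ja Lb; exists [:: (a, b)]; split; [move=> x; rewrite inE => /eqP -> | rewrite big_seq1]. Qed.

Lemma ideal_True : is_ideal (fun _ : P => True). Proof. by []. Qed.

Lemma ideal_pow_ideal (I : P -> Prop) k : is_ideal I -> is_ideal (ideal_pow I k).
Proof. by move=> iI; elim: k => [|k ih] //=; apply: ideal_mul_ideal. Qed.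

End Ideals.

Section Gen.
Variables (K : fieldType) (n : nat).
Local Notation P := {mpoly K[n]}.

Definition Gen (J : P -> Prop) (e : nat) := forall p, J p -> forall m, m \in msupp p ->
  exists g, [/\ J 'X_[g], mdeg g = e & (g <= m)%MM].

Lemma lepm_add (a b c d : 'X_{1..n}) : (a <= c)%MM -> (b <= d)%MM -> (a + b <= c + d)%MM.
Proof.
move=> /mnm_lepP h1 /mnm_lepP h2; apply/mnm_lepP => i; rewrite !mnmDE.
exact: leq_add.
Qed.

Lemma lepm0 (m : 'X_{1..n}) : (0 <= m)%MM.
Proof. by apply/mnm_lepP => i; rewrite mnm0E. Qed.

Lemma Gen_gen (gs : seq P) e :
  (forall q, q \in gs -> exists g, q = 'X_[g] /\ mdeg g = e) -> Gen (ideal_gen gs) e.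
Proof.
move=> hgs p [hs [sz ->]] m /msupp_sum_le /flattenP [s /mapP [i _ ->]].
have gi : gs`_i \in gs by rewrite mem_nth.
have [g [eg dg]] := hgs _ gi.
rewrite eg (perm_mem (msuppMX _ _)) => /mapP [m' _ ->].
exists g; split=> //; last exact: lem_addr.
by rewrite -eg; apply: ideal_gen_mem.
Qed.

Lemma Gen_mul (J L : P -> Prop) e1 e2 : Gen J e1 -> Gen L e2 -> Gen (ideal_mul J L) (e1 + e2).
Proof.
move=> hJ hL p [s [hs ->]] m /msupp_sum_le /flattenP [t /mapP [x xs ->]].
move=> /msuppM_le /allpairsP [[m1 m2] /= [m1p m2p ->]].
rewrite filter_predT in xs; have [Jx Lx] := hs x xs.
have [g1 [Jg1 dg1 lg1]] := hJ _ Jx _ m1p.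
have [g2 [Lg2 dg2 lg2]] := hL _ Lx _ m2p.
exists (g1 + g2)%MM; split; last exact: lepm_add.
  by rewrite mpolyXD; apply: ideal_mul_mem.
by rewrite mdegD dg1 dg2.
Qed.

Lemma Gen_True : Gen (fun _ => True) 0.
Proof. by move=> p _ m _; exists 0%MM; split; rewrite ?mdeg0 ?lepm0. Qed.

Lemma Gen_mono (J : P -> Prop) e p m : is_ideal J -> Gen J e -> J p -> m \in msupp p -> J 'X_[m].
Proof.
move=> iJ hJ Jp mp; have [g [Jg _ lg]] := hJ _ Jp _ mp.
by rewrite -(submK lg) mpolyXD; apply: idealM.
Qed.

Lemma Gen_lb (J : P -> Prop) e p m : Gen J e -> J p -> m \in msupp p -> (e <= mdeg m)%N.
Proof.
move=> hJ Jp mp; have [g [_ dg lg]] := hJ _ Jp _ mp.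
by rewrite -(submK lg) mdegD dg leq_addl.
Qed.

Lemma recon (J : P -> Prop) p : is_ideal J -> (forall m, m \in msupp p -> J 'X_[m]) -> J p.
Proof.
move=> iJ h; rewrite [p]mpolyE; apply: ideal_sum_in => // m mp.
by apply: idealZ => //; apply: h.
Qed.

Lemma Gen_max : Gen (@maxideal K n) 1.
Proof.
apply: Gen_gen => q /mapP [i _ ->]; exists U_(i)%MM; split=> //; exact: mdeg1.
Qed.

Lemma maxideal_ideal : is_ideal (@maxideal K n).
Proof. exact: ideal_gen_ideal. Qed.

Lemma maxideal_X i : @maxideal K n 'X_i.
Proof. by apply: ideal_gen_mem; apply: map_f; rewrite mem_enum. Qed.

End Gen.

Section Homog.
Variables (K : fieldType) (n : nat).
Local Notation P := {mpoly K[n]}.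
Local Notation pi := (@pihomog n K mdeg).

Definition lb e (p : P) := forall m, m \in msupp p -> (e <= mdeg m)%N.

Lemma coef_pi e (p : P) m : (pi e p)@_m = if mdeg m == e then p@_m else 0.
Proof.
rewrite pihomogE raddf_sum /=.
under eq_bigr do rewrite mcoeffZ mcoeffX.
case: (boolP (m \in msupp p)) => mp.
  rewrite big_mkcond (bigD1_seq m) ?msupp_uniq //= eqxx mulr1 big1 ?addr0 //.
  by move=> m' ne; case: ifP => // _; rewrite (negbTE ne) mulr0.
have p0 : p@_m = 0 by apply: memN_msupp_eq0.
rewrite p0 if_same big1 // => m' _; case: eqP => [->|]; first by rewrite p0 mul0r.
by rewrite mulr0.
Qed.

Lemma lb_le e e' (p : P) : (e' <= e)%N -> lb e p -> lb e' p.
Proof. by move=> le h m mp; apply: leq_trans le (h _ mp). Qed.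

Lemma lbM a b (p q : P) : lb a p -> lb b q -> lb (a + b) (p * q).
Proof.
move=> hp hq m /msuppM_le /allpairsP [[m1 m2] /= [m1p m2p ->]].
by rewrite mdegD leq_add // ?hp ?hq.
Qed.

Lemma lbD e (p q : P) : lb e p -> lb e q -> lb e (p + q).
Proof. by move=> hp hq m /msuppD_le; rewrite mem_cat => /orP [/hp|/hq]. Qed.

Lemma pi_lb0 e (p : P) : lb e.+1 p -> pi e p = 0.
Proof.
move=> h; apply/mpolyP => m; rewrite coef_pi mcoeff0; case: eqP => // de.
by apply/eqP; rewrite mcoeff_eq0; apply/negP => /h; rewrite de ltnn.
Qed.

Lemma lb_pi e (p : P) : lb e (pi e p).
Proof.
move=> m; rewrite mcoeff_msupp coef_pi; case: ifP => [/eqP -> _|_]; first exact: leqnn.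
by rewrite eqxx.
Qed.

Lemma lb_rest e (p : P) : lb e p -> lb e.+1 (p - pi e p).
Proof.
move=> h m; rewrite mcoeff_msupp mcoeffB coef_pi.
case: ifP => [_|ne]; first by rewrite subrr eqxx.
rewrite subr0 -mcoeff_msupp => /h; rewrite leq_eqVlt eq_sym ne.
done.
Qed.

Lemma pi_homogM a b (p q : P) : lb a p -> lb b q ->
  pi (a + b) (p * q) = pi a p * pi b q.
Proof.
move=> hp hq.
have -> : p * q = pi a p * pi b q + (pi a p * (q - pi b q) + (p - pi a p) * q).
  by ring.
have h : lb (a + b).+1 (pi a p * (q - pi b q) + (p - pi a p) * q).
  apply: lbD.
    by rewrite -addnS; apply: lbM; [apply: lb_pi | apply: lb_rest].
  by rewrite -addSn; apply: lbM => //; apply: lb_rest.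
rewrite pihomogD (pi_lb0 h) addr0 pihomog_dE //.
by apply: dhomogM; apply: pihomogP.
Qed.

End Homog.

Lemma domain_seq (K : fieldType) (n : nat) (F C : nat -> {mpoly K[n]}) j :
  (0 < j)%N -> C j != 0 ->
  (forall k, \sum_(i < k) F i * C (k - i)%N = 0) -> forall i, F i = 0.
Proof.
move=> j0 Cj H i; apply/eqP; apply/negPn/negP => Fi.
have exF : exists i, F i != 0 by exists i.
have exC : exists j, (0 < j)%N && (C j != 0) by exists j; rewrite j0.
case: (ex_minnP exF) => i0 Fi0 mi0.
case: (ex_minnP exC) => j1 /andP [j10 Cj1] mj1.
have := H (i0 + j1)%N.
have lt : (i0 < i0 + j1)%N by rewrite -{1}(addn0 i0) ltn_add2l.
rewrite (bigD1 (Ordinal lt)) //= addKn big1 ?addr0.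
  by move/eqP; rewrite mulf_eq0 (negbTE Fi0) (negbTE Cj1).
move=> k /eqP ne; have ne' : (k : nat) != i0 by apply/eqP => e; apply: ne; apply: val_inj.
case: (ltngtP k i0) ne' => // [lt1|gt1] _.
  have : F k == 0 by apply/negPn/negP => Fk; have := mi0 _ Fk; rewrite leqNgt lt1.
  by move/eqP ->; rewrite mul0r.
have : C (i0 + j1 - k)%N == 0.
  apply/negPn/negP => Ck.
  have kl := ltn_ord k.
  have := mj1 (i0 + j1 - k)%N; rewrite Ck andbT subn_gt0 kl => /(_ isT).
  lia.
by move/eqP ->; rewrite mulr0.
Qed.

Section Main.
Variables (K : fieldType) (n d : nat) (gens : seq 'X_{1..n}).
Hypothesis Hd : forall mo, mo \in gens -> mdeg mo = d.
Hypothesis Hyp : forall (m : nat) (mo : 'X_{1..n}), (0 < m)%N ->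
     colon (ideal_pow (@monomial_ideal K n gens) m) (@maxideal K n) 'X_[mo] ->
     ~ ideal_pow (@monomial_ideal K n gens) m 'X_[mo] ->
     (mdeg mo).+1 = (m * d)%N.
Local Notation P := {mpoly K[n]}.
Local Notation I := (@monomial_ideal K n gens).
Local Notation M := (@maxideal K n).

Lemma I_ideal : is_ideal I. Proof. exact: ideal_gen_ideal. Qed.
Lemma Gen_I : Gen I d.
Proof. by apply: Gen_gen => q /mapP [g gg ->]; exists g; split=> //; apply: Hd. Qed.
Lemma pow_ideal k : is_ideal (ideal_pow I k).
Proof. exact/ideal_pow_ideal/I_ideal. Qed.
Lemma Gen_pow k : Gen (ideal_pow I k) (k * d).
Proof.
elim: k => [|k ih]; first by rewrite mul0n; apply: Gen_True.
by rewrite mulSnr; apply: Gen_mul => //; apply: Gen_I.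
Qed.
Lemma Gen_mpow k : Gen (ideal_mul M (ideal_pow I k)) (1 + k * d).
Proof. apply: Gen_mul; [exact: Gen_max | exact: Gen_pow]. Qed.
Lemma mpow_ideal k : is_ideal (ideal_mul M (ideal_pow I k)).
Proof. exact/ideal_mul_ideal/maxideal_ideal. Qed.

Lemma colon_mono k p m : colon (ideal_pow I k) M p -> m \in msupp p ->
  colon (ideal_pow I k) M 'X_[m].
Proof.
move=> Cp mp v [hs [sz ->]]; rewrite mulr_sumr; apply: ideal_sum; first exact: pow_ideal.
move=> i; rewrite mulrCA; apply: idealM; first exact: pow_ideal.
set gl := [seq _ | _ <- _] in sz *.
have : gl`_i \in gl by apply: mem_nth; exact: ltn_ord.
move=> /mapP [j _ ->]; rewrite -mpolyXD addmC.
have h1 := Cp _ (@maxideal_X K n j).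

have h2 := Gen_mono (pow_ideal k) (@Gen_pow k) h1.
apply: h2.
by rewrite mcoeff_msupp mcoeffMX -mcoeff_msupp.
Qed.

Lemma colonB k p q : colon (ideal_pow I k) M p -> colon (ideal_pow I k) M q ->
  colon (ideal_pow I k) M (p - q).
Proof. by move=> Cp Cq v Mv; rewrite mulrBl; apply: idealB; [exact: pow_ideal|apply: Cp|apply: Cq]. Qed.

Lemma inj_core k e i : colon (ideal_pow I k) M e ->
  ideal_mul M (ideal_pow I k) ('X_i * e) -> ideal_pow I k e.
Proof.
move=> Ce Me; apply: recon; first exact: pow_ideal.
move=> m me; case: (classic (ideal_pow I k 'X_[m])) => // H; exfalso.
case: k Ce Me H => [|k] Ce Me H; first by apply: H.
have := Hyp (ltn0Sn k) (colon_mono Ce me) H.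
have : (U_(i) + m)%MM \in msupp ('X_i * e).
  by rewrite mulrC mcoeff_msupp mcoeffMX -mcoeff_msupp.
move=> /(Gen_lb (@Gen_mpow k.+1) Me); rewrite mdegD mdeg1; lia.
Qed.


Local Notation pi := (@pihomog n K mdeg).

Lemma lb_F k f : ideal_pow I k f -> lb (k * d) f.
Proof. by move=> h m; apply: (Gen_lb (@Gen_pow k) h). Qed.

Lemma lb_Soc j c : colon (ideal_pow I j) M c -> lb (j * d).-1 c.
Proof.
move=> Cc m mc; case: (classic (ideal_pow I j 'X_[m])) => H.
  have : m \in msupp ('X_[m] : P) by rewrite msuppX mem_seq1.
  move=> /(Gen_lb (@Gen_pow j) H) h; apply: leq_trans h; exact: leq_pred.
case: j Cc H => [|j] Cc H; first by case: H.
by have := Hyp (ltn0Sn j) (colon_mono Cc mc) H => <-.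
Qed.

Lemma pi_Soc0 j c : colon (ideal_pow I j) M c -> pi (j * d).-1 c = 0 -> ideal_pow I j c.
Proof.
move=> Cc h0; apply: recon; first exact: pow_ideal.
move=> m mc; case: (classic (ideal_pow I j 'X_[m])) => // H; exfalso.
case: j Cc h0 H => [|j] Cc h0 H; first by case: H.
have := Hyp (ltn0Sn j) (colon_mono Cc mc) H => e.
move: mc; rewrite mcoeff_msupp.
have := congr1 (mcoeff m) h0; rewrite coef_pi mcoeff0 -e /= eqxx => ->.
by rewrite eqxx.
Qed.

Lemma pi_F0 k f : ideal_pow I k f -> pi (k * d) f = 0 -> ideal_mul M (ideal_pow I k) f.
Proof.
move=> Ff h0; apply: recon; first exact: mpow_ideal.
move=> m mf.
have [g [Xg dg lg]] := @Gen_pow k _ Ff _ mf.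
have ne : mdeg m != (k * d)%N.
  apply/negP => /eqP e; move: mf; rewrite mcoeff_msupp.
  by have := congr1 (mcoeff m) h0; rewrite coef_pi mcoeff0 e eqxx => ->; rewrite eqxx.
have [i lti] : exists i, (g i < m i)%N.
  apply: NNPP => hn; apply/negP: ne.
  suff -> : m = g by rewrite dg eqxx.
  apply/mnmP => i; apply/eqP; rewrite eqn_leq; move/mnm_lepP: lg => -> /=; rewrite andbT.
  by rewrite leqNgt; apply/negP => h; apply: hn; exists i.
have lg' : (U_(i) + g <= m)%MM.
  apply/mnm_lepP => j; rewrite mnmDE mnm1E; case: eqP => [<-|_]; first by rewrite add1n.
  by rewrite add0n; move/mnm_lepP: lg.
rewrite -(submK lg') mpolyXD; apply: idealM; first exact: mpow_ideal.
by rewrite mpolyXD; apply: ideal_mul_mem => //; apply: maxideal_X.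
Qed.

Lemma pi_I k p : (0 < d)%N -> (0 < k)%N -> ideal_pow I k p -> pi (k * d).-1 p = 0.
Proof.
move=> d0 k0 h; apply: pi_lb0; rewrite prednK ?muln_gt0 ?d0 ?k0 //.
exact: lb_F.
Qed.

Definition phi (x : 'I_n) (c : nat -> P) : nat -> P := fun k => 'X_x * c k.

Lemma phi_valid x c : Soc_valid I c -> F_valid I (phi x c).
Proof.
move=> [[N hN] Cc]; split.
  by exists N => k /hN; rewrite /phi => ->; rewrite mulr0.
by move=> k; rewrite /phi mulrC; apply: Cc; apply: maxideal_X.
Qed.

Lemma phi_eq x c c' : Soc_valid I c -> Soc_valid I c' ->
  (Soc_eq I c c' <-> F_eq I (phi x c) (phi x c')).
Proof.
move=> [_ Cc] [_ Cc']; split=> h k; rewrite /phi.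
  by rewrite -mulrBr; apply: ideal_mul_mem => //; apply: maxideal_X.
by apply: (@inj_core k _ x); [apply: colonB | rewrite mulrBr; apply: h].
Qed.

Lemma torsion c : Soc_valid I c -> ~ Soc_eq I c (gzero K n) ->
  forall f, F_valid I f -> Soc_eq I (gmul f c) (gzero K n) -> F_eq I f (gzero K n).
Proof.
move=> [_ Cc] nz f [_ Ff] hz.
have [j hj] : exists j, ~ ideal_pow I j (c j).
  apply: NNPP => hn; apply: nz => k; rewrite /gzero subr0.
  by apply: NNPP => h; apply: hn; exists k.
have pj : pi (j * d).-1 (c j) != 0 by apply/eqP => e; apply: hj; apply: pi_Soc0.
have j0 : (0 < j)%N by case: j hj {pj} => [|j] // hj; exfalso; apply: hj.
have [m [mc Hm]] : exists m, m \in msupp (c j) /\ ~ ideal_pow I j 'X_[m].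
  apply: NNPP => hn; apply: hj; apply: recon; first exact: pow_ideal.
  by move=> m mc; apply: NNPP => H; apply: hn; exists m.
have e := Hyp j0 (colon_mono (Cc j) mc) Hm.
have d0 : (0 < d)%N by move: e; case: (d) => //; rewrite muln0.
have Hall := @domain_seq K n (fun i => pi (i * d) (f i)) (fun j => pi (j * d).-1 (c j)) j j0 pj.
have {}Hall : forall i, pi (i * d) (f i) = 0.
  apply: Hall => k; case: k => [|k]; first by rewrite big_ord0.
  have hk := hz k.+1; rewrite /gzero subr0 /gmul in hk.
  have := pi_I d0 (ltn0Sn k) hk; rewrite raddf_sum big_ord_recr /=.
  rewrite subnn (@pi_I _ (f k.+1 * c 0%N) d0 (ltn0Sn k)); last first.
    by apply: idealMr; [apply: pow_ideal | apply: Ff].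
  rewrite addr0 => h; apply: etrans h; apply: eq_bigr => i _ /=.
  have ht : (0 < (k.+1 - i) * d)%N by rewrite muln_gt0 subn_gt0 ltn_ord d0.
  have ek : (k.+1 * d = i * d + (k.+1 - i) * d)%N by rewrite -mulnDl subnKC // ltnW.
  have -> : ((k.+1 * d).-1 = i * d + ((k.+1 - i) * d).-1)%N.
    by rewrite ek; move: ht; case: ((k.+1 - i) * d)%N => // t _; rewrite addnS.
  by rewrite pi_homogM //; [apply: lb_F; apply: Ff | apply: lb_Soc; apply: Cc].
move=> k; rewrite /gzero subr0; apply: pi_F0; [exact: Ff | exact: Hall].
Qed.

Lemma iso_part (x : 'I_n) : soc_iso_to_ideal I.
Proof.
exists (phi x); split.
- exact: phi_valid.
- exact: phi_eq.
- move=> c c' _ _ k; rewrite /phi /gadd mulrDr subrr; exact: ideal0 (mpow_ideal k).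
- move=> f c _ _ k; rewrite /phi /gmul mulr_sumr.
  under eq_bigr do rewrite mulrCA.
  rewrite subrr; exact: ideal0 (mpow_ideal k).
Qed.

Lemma gmul_swap (u v : nat -> P) k :
  \sum_(i < k.+1) u i * v (k - i)%N = \sum_(i < k.+1) u (k - i)%N * v i.
Proof.
rewrite (reindex_inj rev_ord_inj) /=; apply: eq_bigr => i _.
by rewrite subSS subKn // -ltnS.
Qed.

Lemma rank_part (x : 'I_n) : soc_nonzero I -> soc_rank I 1.
Proof.
move=> [c [Vc nz]]; split.
- exists [:: c]; split=> //; split.
    by move=> i; rewrite ltnS leqn0 => /eqP ->.
  move=> fs; case: fs => [|f []] // _ hv hs i; rewrite ltnS leqn0 => /eqP -> /=.
  apply: (torsion Vc nz); first exact: (hv 0%N).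
  move=> k; have := hs k; rewrite big_ord_recl big_ord0 /gadd /gzero /= addr0.
  done.
- move=> cs; case: cs => [|a [|b []]] // _ hv hind.
  have Va := hv 0%N isT; have Vb := hv 1%N isT; simpl in Va, Vb.
  case: (classic (Soc_eq I a (gzero K n))) => za.
  + pose one : nat -> P := fun k => if k == 0%N then 1 else 0.
    have := hind [:: one; gzero K n] erefl.
    have h : F_eq I one (gzero K n).
      apply: (hind [:: one; gzero K n] erefl _ _ 0%N isT).
      * move=> i; case: i => [|[|i]] // _; split.
        - by exists 0%N => k; rewrite /one; case: k.
        - by move=> k; rewrite /one; case: k => [|k] //; exact: (ideal0 (pow_ideal k.+1)).
        - by exists 0%N.
        - by move=> k; exact: (ideal0 (pow_ideal k)).
      * move=> k; rewrite !big_ord_recl big_ord0 /gadd /gzero /gmul /= subr0.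
        rewrite big_ord_recl /= subn0 mul1r big1 ?addr0; last by move=> i _; rewrite mul0r.
        rewrite big1 ?addr0; last by move=> i _; rewrite mul0r.
        by have := za k; rewrite /gzero subr0.
    move=> _; have := h 0%N; rewrite /one /gzero /= subr0 => h1.
    have := Gen_lb (@Gen_mpow 0%N) h1 (_ : 0%MM \in msupp (1 : P)).
    by rewrite msupp1 mem_seq1 eqxx mdeg0 => /(_ isT).
  + have h : F_eq I (fun k => - phi x a k) (gzero K n).
      apply: (hind [:: phi x b; fun k => - phi x a k] erefl _ _ 1%N isT).
      * move=> i; case: i => [|[|i]] // _; first exact: phi_valid.
        have [[N hN] Fa] := phi_valid x Va; split.
          by exists N => k /hN e /=; rewrite e oppr0.
        by move=> k; apply: idealN; [apply: pow_ideal | apply: Fa].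
      * move=> k; rewrite !big_ord_recl big_ord0 /gadd /gzero /gmul /= subr0 addr0.
        rewrite gmul_swap /phi.
        under eq_bigr do rewrite mulNr.
        rewrite sumrN.
        rewrite -sumrB big1 => [|i _]; [exact: (ideal0 (pow_ideal k)) | ring].
    apply: za => k; rewrite /gzero subr0.
    apply: (@inj_core k _ x); first by case: Va.
    by have := h k; rewrite /gzero subr0 /phi => /(idealN (mpow_ideal k)); rewrite opprK.
Qed.

Lemma mul_sub (J L : P -> Prop) p : is_ideal L -> ideal_mul J L p -> L p.
Proof.
move=> iL [s [hs ->]]; apply: ideal_sum_in => // y ys.
by apply: idealM => //; case: (hs y ys).
Qed.

Lemma all_in (hM : forall v, M v -> v = 0) k p : ideal_pow I k p.
Proof.
have key : forall k, (0 < k)%N -> ~ ideal_pow I k 1 -> (k * d = 1)%N.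
  move=> k' k0 h.
  have C : colon (ideal_pow I k') M 'X_[0%MM].
    by move=> v /hM ->; rewrite mulr0; exact: (ideal0 (pow_ideal k')).
  have H : ~ ideal_pow I k' 'X_[0%MM] by rewrite mpolyX0.
  by have := Hyp k0 C H; rewrite mdeg0 => <-.
have one : forall k, ideal_pow I k 1.
  move=> k'; apply: NNPP => h; case: k' h => [|k'] h; first by apply: h.
  have := key _ (ltn0Sn k') h => /eqP; rewrite muln_eq1 => /andP [/eqP k1 /eqP d1].
  have h2 : ~ ideal_pow I 2 1.
    move=> h2; apply: h; rewrite k1 /=.
    have e : (1 : P) = 1 * 1 by rewrite mulr1.
    rewrite e; apply: ideal_mul_mem => //.
    by apply: mul_sub h2; exact: I_ideal.
  by have := key 2%N isT h2; rewrite d1.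
by rewrite -(mulr1 p); apply: idealM; [exact: pow_ideal | exact: one].
Qed.

End Main.

Theorem proposition1p3 (K : fieldType) (n d : nat) (gens : seq 'X_{1..n}) :
  (forall mo, mo \in gens -> mdeg mo = d) ->
  (forall (m : nat) (mo : 'X_{1..n}), (0 < m)%N ->
     colon (ideal_pow (@monomial_ideal K n gens) m) (@maxideal K n) 'X_[mo] ->
     ~ ideal_pow (@monomial_ideal K n gens) m 'X_[mo] ->
     (mdeg mo).+1 = (m * d)%N) ->
  soc_iso_to_ideal (@monomial_ideal K n gens) /\
  (soc_nonzero (@monomial_ideal K n gens) -> soc_rank (@monomial_ideal K n gens) 1).
Proof.
move: gens; case: n => [|n'] gens Hd Hyp.
- have hM : forall v, @maxideal K 0 v -> v = 0.
    move=> v [hs [sz ->]]; apply: big1 => i _.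
    by case: i => i /=; rewrite size_map size_enum_ord.
  have all := all_in Hyp hM.
  have z : forall k, ideal_mul (@maxideal K 0) (ideal_pow (@monomial_ideal K 0 gens) k) 0.
    by move=> k; apply: ideal0; apply: ideal_mul_ideal; apply: maxideal_ideal.
  split.
  + exists (fun _ => gzero K 0); split.
    * by move=> c _; split; [exists 0%N | move=> k; apply: all].
    * by move=> c c' _ _; split=> _ k; [rewrite /gzero subrr; apply: z | apply: all].
    * by move=> c c' _ _ k; rewrite /gzero /gadd addr0 subrr; apply: z.
    * move=> f c _ _ k; rewrite /gmul /gzero big1 ?subrr; first exact: z.
      by move=> i _; rewrite mulr0.
  + by move=> [c [_ nz]]; exfalso; apply: nz => k; apply: all.
- by split; [exact: (iso_part Hd Hyp ord0) | exact: (rank_part Hd Hyp ord0)].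
Qed.
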